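(* Let $\mathcal V$ be a finite alphabet, $\mathcal V^*$ the set of finite strings over $\mathcal V$, $e$ an environment and $p$ a probability distribution on test suites $t\in\mathcal V^*$. Let $$\mathrm{sim}_{p,e}(c_1,c_2):=\mathbb E_{t\sim p}\Big[\tfrac{1}{|t|}\sum_{k=1}^{|t|}\mathbf 1\{O_k(c_1,t\mid e)=O_k(c_2,t\mid e)\}\Big]$$ and, for $s\in\mathbb N$, $\mathrm{sim}^s_{p,e}(c_1,c_2):=\mathrm{sim}_{p,e}(c_1,c_2)^s$. Define functional equivalence $$\mathrm{sim}^\infty_{p,e}(c_1,c_2):=\mathbf 1\{O(c_1,t\mid e)=O(c_2,t\mid e)\ \text{for all } t\in\mathcal V^* \text{ with } p(t)>0\}.$$ Then for every $s\in\mathbb N$, $\mathrm{sim}^s_{p,e}$ is a positive semi-definite kernel on $\mathcal V^*$, and for all $c_1,c_2\in\mathcal V^*$, $\lim_{s\to\infty}\mathrm{sim}^s_{p,e}(c_1,c_2)=\mathrm{sim}^\infty_{p,e}(c_1,c_2)$.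
   Context: A test suite $t\in\mathcal V^*$ consists of $|t|\ge 1$ test cases. For an environment $e$, an implementation $c\in\mathcal V^*$ and a test suite $t$, the test harness returns a deterministic output vector $O(c,t\mid e)=(O_1(c,t\mid e),\dots,O_{|t|}(c,t\mid e))\in\mathbb O^{|t|}$ for a set $\mathbb O$ of possible test outputs. *)

(* Defs.v *)
From mathcomp Require Import all_boot all_order all_algebra.
From mathcomp Require Import all_classical all_reals all_analysis.
Set Implicit Arguments. Unset Strict Implicit. Unset Printing Implicit Defensive.
Import Order.TTheory GRing.Theory Num.Theory.
Local Open Scope ring_scope.
Local Open Scope classical_set_scope.

Section Defs.
Variables (R : realType) (V : finType) (Env O : Type).

Definition is_distribution (p : seq V -> R) : Prop :=
  (forall t, 0 <= p t) /\ (\esum_(t in [set: seq V]) (p t)%:E = 1%E).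

(* ncases t = |t|, the number of test cases of the suite t;
   out e c t = O(c, t | e), a vector of ncases t outputs. *)
Variable ncases : seq V -> nat.
Variable out : Env -> seq V -> forall t : seq V, (ncases t).-tuple O.

Definition agree (e : Env) (c1 c2 t : seq V) : R :=
  (ncases t)%:R^-1 *
  \sum_(k < ncases t)
     (if `[< tnth (out e c1 t) k = tnth (out e c2 t) k >] then 1 else 0).

Definition sim (p : seq V -> R) (e : Env) (c1 c2 : seq V) : R :=
  fine (\esum_(t in [set: seq V]) (p t * agree e c1 c2 t)%:E).

Definition sim_pow (p : seq V -> R) (e : Env) (s : nat) (c1 c2 : seq V) : R :=
  sim p e c1 c2 ^+ s.

Definition sim_inf (p : seq V -> R) (e : Env) (c1 c2 : seq V) : R :=
  if `[< forall t, 0 < p t -> out e c1 t = out e c2 t >] then 1 else 0.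

End Defs.

Definition psd_kernel (R : realType) (X : Type) (k : X -> X -> R) : Prop :=
  (forall x y, k x y = k y x) /\
  (forall (n : nat) (x : 'I_n -> X) (a : 'I_n -> R),
      0 <= \sum_(i < n) \sum_(j < n) a i * a j * k (x i) (x j)).

(* Main.v *)
Require Import Defs.
From mathcomp Require Import all_boot all_order all_algebra.
From mathcomp Require Import all_classical all_reals all_analysis.
From mathcomp Require Import ring lra.
Import Order.TTheory GRing.Theory Num.Theory.
Local Open Scope ring_scope.
Local Open Scope classical_set_scope.
Lemma esumZ (R : realType) (T : choiceType) (I : set T) (a : T -> \bar R) r :
  0 <= r -> (forall i, I i -> (0 <= a i)%E) ->
  (\esum_(i in I) (r%:E * a i) = r%:E * \esum_(i in I) a i)%E.
Proof.
move=> r0 a0; rewrite /esum -ereal_supZl //; last first.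
  by apply/set0P; exists 0%E; exists set0; [exact: fsets_set0|rewrite fsbig_set0].
have H X : fsets I X -> (\sum_(x \in X) (r%:E * a x) = r%:E * \sum_(x \in X) a x)%E.
  move=> [finX XI]; rewrite !fsbig_finite // !big_seq ge0_sume_distrr // => i.
  by rewrite in_fset_set // inE => /XI /a0.
congr ereal_sup; apply/seteqP; split => x /=.
- move=> [X XI <-]; exists (\sum_(x \in X) a x)%E; first by exists X.
  by rewrite H.
- by move=> [_ [X XI <-] <-]; exists X => //; rewrite H.
Qed.
Lemma psd_eq_mul (R : realType) (X Y : Type) (f : X -> Y) (M : X -> X -> R) :
 (forall n (x : 'I_n -> X) (a : 'I_n -> R),
    0 <= \sum_(i < n) \sum_(j < n) a i * a j * M (x i) (x j)) ->
 forall n (x : 'I_n -> X) (a : 'I_n -> R),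
   0 <= \sum_(i < n) \sum_(j < n) a i * a j *
        ((if `[< f (x i) = f (x j) >] then 1 else 0) * M (x i) (x j)).
Proof.
move=> HM n x a.
pose rep (i : 'I_n) := arg_min i (fun c => `[< f (x c) = f (x i) >]) (fun c : 'I_n => val c).
have repP i : f (x (rep i)) = f (x i) /\ forall c, f (x c) = f (x i) -> (val (rep i) <= val c)%N.
  rewrite /rep; case: arg_minnP; first exact/asboolP.
  move=> c /asboolP Hc Hmin; split => // c' Hc'; apply: Hmin; exact/asboolP.
have repE i j : `[< f (x i) = f (x j) >] = (rep i == rep j).
  apply/asboolP/eqP => [Hij|Hr].
    have [Hi1 Hi2] := repP i; have [Hj1 Hj2] := repP j.
    apply: val_inj; apply/eqP; rewrite eqn_leq; apply/andP; split.
      by apply: Hi2; rewrite Hj1.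
    by apply: Hj2; rewrite Hi1.
  by have [<- _] := repP i; have [<- _] := repP j; rewrite Hr.
suff -> : \sum_(i < n) \sum_(j < n) a i * a j *
        ((if `[< f (x i) = f (x j) >] then 1 else 0) * M (x i) (x j)) =
  \sum_(c < n) \sum_(i < n) \sum_(j < n)
   (a i * (rep i == c)%:R) * (a j * (rep j == c)%:R) * M (x i) (x j).
  by apply: sumr_ge0 => c _; apply: HM.
rewrite [RHS]exchange_big /=; apply: eq_bigr => i _.
rewrite [RHS]exchange_big /=; apply: eq_bigr => j _.
rewrite repE (bigD1 (rep i)) //= eqxx big1 ?addr0; last first.
  move=> c Hc; have -> : (rep i == c) = false by apply/negbTE; rewrite eq_sym.
  by rewrite /= mulr0n mulr0 !mul0r.
rewrite [rep j == rep i]eq_sym.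
case: (rep i == rep j); rewrite /= ?mulr1n ?mulr0n ?mulr1 ?mulr0 ?mul1r ?mul0r.
all: try done. set z := (X in _ * X = 0). have -> : z = 0 by []. by rewrite mulr0.
Qed.

Section Main.
Variables (R : realType) (V : finType) (Env O : Type)
    (ncases : seq V -> nat)
    (out : Env -> seq V -> forall t : seq V, (ncases t).-tuple O)
    (e : Env) (p : seq V -> R)
    (hp : is_distribution p)
    (hcases : forall t, 0 < p t -> (0 < ncases t)%N).

Let ag := agree R out e.
Let si := sim out p e.

Lemma ind_ge0 (P : Prop) : 0 <= (if `[< P >] then 1 else 0 : R).
Proof. by case: ifP. Qed.
Lemma ind_le1 (P : Prop) : (if `[< P >] then 1 else 0 : R) <= 1.
Proof. by case: ifP. Qed.

Lemma agree_ge0 c1 c2 t : 0 <= ag c1 c2 t.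
Proof.
by rewrite /ag /agree mulr_ge0 ?invr_ge0 ?ler0n // sumr_ge0 // => k _; exact: ind_ge0.
Qed.

Lemma agree_le1 c1 c2 t : ag c1 c2 t <= 1.
Proof.
rewrite /ag /agree.
suff H : forall n (F : 'I_n -> R), (forall k, F k <= 1) -> n%:R^-1 * \sum_(k < n) F k <= 1.
  by apply: H => k; exact: ind_le1.
move=> n F F1; case: (posnP n) => [n0|n0].
  have -> : n%:R = 0 :> R by rewrite n0.
  by rewrite invr0 mul0r.
rewrite ler_pdivrMl ?ltr0n // mulr1.
apply: le_trans (_ : \sum_(k < n) (1 : R) <= _).
  by apply: ler_sum => k _.
by rewrite sumr_const card_ord.
Qed.

Lemma agree_sym c1 c2 t : ag c1 c2 t = ag c2 c1 t.
Proof.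
rewrite /ag /agree; congr (_ * _); apply: eq_bigr => k _.
by congr (if _ then _ else _); apply/asboolP/asboolP => ->.
Qed.

Let g c1 c2 t := p t * ag c1 c2 t.

Lemma g_ge0 c1 c2 t : 0 <= g c1 c2 t.
Proof. by rewrite /g mulr_ge0 ?agree_ge0 //; case: hp. Qed.

Lemma esum_g_le1 c1 c2 : (\esum_(t in [set: seq V]) (g c1 c2 t)%:E <= 1)%E.
Proof.
case: hp => hp0 <-; apply: le_esum => t _; rewrite lee_fin /g.
by rewrite ler_piMr ?hp0 ?agree_le1.
Qed.

Lemma simE c1 c2 : (si c1 c2)%:E = \esum_(t in [set: seq V]) (g c1 c2 t)%:E.
Proof.
rewrite /si /sim fineK // ge0_fin_numE; last first.
  by apply: esum_ge0 => t _; rewrite lee_fin g_ge0.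
by apply: (le_lt_trans (esum_g_le1 c1 c2)); rewrite ltry.
Qed.

Lemma sim_ge0 c1 c2 : 0 <= si c1 c2.
Proof. by rewrite -lee_fin simE; apply: esum_ge0 => t _; rewrite lee_fin g_ge0. Qed.

Lemma sim_le1 c1 c2 : si c1 c2 <= 1.
Proof. by rewrite -lee_fin simE; apply: esum_g_le1. Qed.

Lemma sim_sym c1 c2 : si c1 c2 = si c2 c1.
Proof.
apply/EFin_inj; rewrite !simE; apply: eq_esum => t _.
by rewrite /g agree_sym.
Qed.

Lemma esum_lin n (x : 'I_n -> seq V) (w : 'I_n -> 'I_n -> R) :
  (forall i j, 0 <= w i j) ->
  (\sum_(i < n) \sum_(j < n) w i j * si (x i) (x j))%:E =
  \esum_(t in [set: seq V]) (\sum_(i < n) \sum_(j < n) w i j * g (x i) (x j) t)%:E.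
Proof.
move=> w0.
transitivity (\esum_(t in [set: seq V]) \sum_(i < n) \sum_(j < n)
   (w i j * g (x i) (x j) t)%:E); last first.
  by apply: eq_esum => t _; rewrite -sumEFin; apply: eq_bigr => i _; rewrite sumEFin.
rewrite esum_sum; last first.
  by move=> t i _ _; apply: sume_ge0 => j _; rewrite lee_fin mulr_ge0 ?g_ge0.
rewrite -sumEFin; apply: eq_bigr => i _.
rewrite esum_sum; last by move=> t j _ _; rewrite lee_fin mulr_ge0 ?g_ge0.
rewrite -sumEFin; apply: eq_bigr => j _.
rewrite EFinM simE -esumZ //; last by move=> t _; rewrite lee_fin g_ge0.
Qed.

Lemma step (M : seq V -> seq V -> R) :
  (forall c1 c2, 0 <= M c1 c2) ->
  (forall n (x : 'I_n -> seq V) (a : 'I_n -> R),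
    0 <= \sum_(i < n) \sum_(j < n) a i * a j * M (x i) (x j)) ->
  forall n (x : 'I_n -> seq V) (a : 'I_n -> R),
    0 <= \sum_(i < n) \sum_(j < n) a i * a j * (si (x i) (x j) * M (x i) (x j)).
Proof.
move=> M0 HM n x a.
pose u i j := `|a i * a j| + a i * a j.
pose v i j := `|a i * a j| - a i * a j.
have u0 i j : 0 <= u i j * M (x i) (x j).
  by rewrite mulr_ge0 // /u -lerBlDr sub0r -normrN ler_norm.
have v0 i j : 0 <= v i j * M (x i) (x j).
  by rewrite mulr_ge0 // /v subr_ge0 ler_norm.
have pt t : 0 <= \sum_(i < n) \sum_(j < n) a i * a j * (g (x i) (x j) t * M (x i) (x j)).
  have -> : \sum_(i < n) \sum_(j < n) a i * a j * (g (x i) (x j) t * M (x i) (x j)) =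
     p t * (ncases t)%:R^-1 * \sum_(k < ncases t) \sum_(i < n) \sum_(j < n) a i * a j *
        ((if `[< tnth (out e (x i) t) k = tnth (out e (x j) t) k >] then 1 else 0)
          * M (x i) (x j)).
    rewrite [in RHS]exchange_big mulr_sumr; apply: eq_bigr => i _.
    rewrite [in RHS]exchange_big mulr_sumr; apply: eq_bigr => j _.
    rewrite /g /ag /agree -!mulr_sumr -mulr_suml; ring.
  apply: mulr_ge0; first by rewrite mulr_ge0 ?invr_ge0 ?ler0n //; case: hp.
  apply: sumr_ge0 => k _.
  exact: (@psd_eq_mul R _ _ (fun c => tnth (out e c t) k) M HM).
have Hle : ((\sum_(i < n) \sum_(j < n) v i j * M (x i) (x j) * si (x i) (x j))%:E <=
           (\sum_(i < n) \sum_(j < n) u i j * M (x i) (x j) * si (x i) (x j))%:E)%E.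
  have E1 := esum_lin _ x _ u0; have E2 := esum_lin _ x _ v0; cbv beta in E1, E2.
  rewrite E1 E2; apply: le_esum => t _; rewrite lee_fin -subr_ge0.
  rewrite -sumrB; under eq_bigr do rewrite -sumrB.
  have -> : \sum_(i < n) \sum_(j < n)
      (u i j * M (x i) (x j) * g (x i) (x j) t - v i j * M (x i) (x j) * g (x i) (x j) t) =
      2 * \sum_(i < n) \sum_(j < n) a i * a j * (g (x i) (x j) t * M (x i) (x j)).
    rewrite mulr_sumr; apply: eq_bigr => i _; rewrite mulr_sumr; apply: eq_bigr => j _.
    rewrite /u /v; ring.
  by rewrite mulr_ge0.
move: Hle; rewrite lee_fin -subr_ge0 -sumrB.
under eq_bigr do rewrite -sumrB.
move=> Hle.
have -> : \sum_(i < n) \sum_(j < n) a i * a j * (si (x i) (x j) * M (x i) (x j)) =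
   2^-1 * \sum_(i < n) \sum_(j < n)
      (u i j * M (x i) (x j) * si (x i) (x j) - v i j * M (x i) (x j) * si (x i) (x j)).
  rewrite mulr_sumr; apply: eq_bigr => i _; rewrite mulr_sumr; apply: eq_bigr => j _.
  rewrite /u /v; field.
  by [].
by rewrite mulr_ge0 // invr_ge0.
Qed.


Lemma psd_pow s : psd_kernel (sim_pow out p e s).
Proof.
split.
  by move=> c1 c2; rewrite /sim_pow; have := sim_sym c1 c2; rewrite /si => ->.
elim: s => [|s IH] n x a.
  rewrite /sim_pow.
  have -> : \sum_(i < n) \sum_(j < n) a i * a j * sim out p e (x i) (x j) ^+ 0 =
     (\sum_(i < n) a i) ^+ 2.
    rewrite expr2 mulr_suml; apply: eq_bigr => i _; rewrite mulr_sumr.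
    by apply: eq_bigr => j _; rewrite expr0 mulr1.
  exact: sqr_ge0.
rewrite /sim_pow.
under eq_bigr do under eq_bigr do rewrite exprS.
apply: (step (fun c1 c2 => sim out p e c1 c2 ^+ s)).
  by move=> c1 c2; apply: exprn_ge0; exact: sim_ge0.
exact: IH.
Qed.

Lemma conv c1 c2 :
  (fun s : nat => sim_pow out p e s c1 c2) @ \oo --> (sim_inf out p e c1 c2 : R^o).
Proof.
rewrite /sim_inf /sim_pow.
case: (pselect (forall t, 0 < p t -> out e c1 t = out e c2 t)) => H.
  rewrite asboolT //.
  have s1 : sim out p e c1 c2 = 1.
    apply/EFin_inj; rewrite (simE c1 c2); case: hp => hp0 <-.
    apply: eq_esum => t _; congr EFin; rewrite /g.
    case: (ltP 0 (p t)) => [pt|pt0]; last first.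
      have -> : p t = 0 by apply/eqP; rewrite eq_le pt0 hp0.
      by rewrite mul0r.
    rewrite /ag /agree H //.
    under eq_bigr do rewrite asboolT //.
    rewrite sumr_const card_ord mulVf ?mulr1 //.
    by rewrite pnatr_eq0 -lt0n hcases.
  have -> : (fun s => sim out p e c1 c2 ^+ s) = fun _ => 1.
    by apply: funext => s; rewrite s1 expr1n.
  exact: (cvg_cst (1:R^o)).
rewrite asboolF //.
move/existsNP: H => [t0 /not_implyP [pt0 hne]].
have [k0 hk0] : exists k, tnth (out e c1 t0) k <> tnth (out e c2 t0) k.
  apply/existsNP => Hall; apply: hne; apply: eq_from_tnth => k; exact: Hall k.
have n0 := hcases t0 pt0.
have ag1 : ag c1 c2 t0 < 1.
  rewrite /ag /agree ltr_pdivrMl ?ltr0n // mulr1.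
  have -> : (ncases t0)%:R = \sum_(k < ncases t0) (1 : R) by rewrite sumr_const card_ord.
  rewrite (bigD1 k0) // [X in _ < X](bigD1 k0) //= asboolF // add0r.
  have : \sum_(k < ncases t0 | k != k0)
      (if `[< tnth (out e c1 t0) k = tnth (out e c2 t0) k >] then 1 else 0)
     <= \sum_(k < ncases t0 | k != k0) (1 : R).
    by apply: ler_sum => k _; exact: ind_le1.
  lra.
have D : (1 = (si c1 c2)%:E +
     \esum_(t in [set: seq V]) (p t * (1 - ag c1 c2 t))%:E)%E.
  case: hp => hp0 <-; rewrite simE -esumD; last first.
  - by move=> t _; rewrite lee_fin mulr_ge0 // subr_ge0 agree_le1.
  - by move=> t _; rewrite lee_fin g_ge0.
  by apply: eq_esum => t _; rewrite -EFinD /g; congr EFin; ring.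
have P : (0 < \esum_(t in [set: seq V]) (p t * (1 - ag c1 c2 t))%:E)%E.
  apply: (@lt_le_trans _ _ (p t0 * (1 - ag c1 c2 t0))%:E).
    by rewrite lte_fin mulr_gt0 // subr_gt0.
  apply: esum_ge; exists [set t0]; first by split; [exact: finite_set1|].
  by rewrite fsbig_set1.
have slt : sim out p e c1 c2 < 1.
  by rewrite -lte_fin; rewrite [X in (_ < X)%E]D lteDl.
apply: cvg_expr; rewrite ger0_norm //; exact: sim_ge0.
Qed.

Lemma main :
  (forall s : nat, psd_kernel (sim_pow out p e s)) /\
  (forall c1 c2 : seq V,
      (fun s : nat => sim_pow out p e s c1 c2) @ \oo --> (sim_inf out p e c1 c2 : R^o)).
Proof. by split; [exact: psd_pow | exact: conv]. Qed.

End Main.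

Theorem proposition4p4 (R : realType) (V : finType) (Env O : Type)
    (ncases : seq V -> nat)
    (out : Env -> seq V -> forall t : seq V, (ncases t).-tuple O)
    (e : Env) (p : seq V -> R)
    (hp : is_distribution p)
    (hcases : forall t, 0 < p t -> (0 < ncases t)%N) :
  (forall s : nat, psd_kernel (sim_pow out p e s)) /\
  (forall c1 c2 : seq V,
      (fun s : nat => sim_pow out p e s c1 c2) @ \oo --> (sim_inf out p e c1 c2 : R^o)).
Proof. exact: (@main R V Env O ncases out e p hp hcases). Qed.
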